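(* Let $n\ge 1$ and let $\mathcal{A}\subseteq \mathcal{S}\times\mathcal{X}^n$ be a nonempty set of input pairs. The following are equivalent: (a) $d_n\big((s_0,\mathbf{x}),(\hat s_0,\hat{\mathbf{x}})\big)\le \beta$ for all $(s_0,\mathbf{x}),(\hat s_0,\hat{\mathbf{x}})\in\mathcal{A}$; (b) there exists a single sequence $\mathbf{y}_{\mathcal{A}}\in\mathbb{Z}^n$ with $\mathbf{y}_{\mathcal{A}}\in \bigcap_{(s_0,\mathbf{x})\in\mathcal{A}} \mathcal{Y}^n(s_0,\mathbf{x})$, where the feasible sets are taken with output alphabet $\mathcal{Y}=\mathbb{Z}$.
   Context: Fix integers $\alpha\ge 1$ (maximal consumption per step) and $\beta\ge 0$ (battery capacity). Let $\mathcal{X}=\{0,1,\dots,\alpha\}$ and $\mathcal{S}=\{0,1,\dots,\beta\}$. For an initial battery state $s_0\in\mathcal{S}$, a consumption sequence $\mathbf{x}=(x_0,\dots,x_{n-1})\in\mathcal{X}^n$ and a request sequence $\mathbf{y}=(y_0,\dots,y_{n-1})\in\mathbb{Z}^n$, the battery states are $s_i=s_0+\sum_{k=0}^{i-1}y_k-\sum_{k=0}^{i-1}x_k$ for $i=0,1,\dots,n$. For an output alphabet $\mathcal{Y}\subseteq\mathbb{Z}$, the set of feasible requests is $\mathcal{Y}^n(s_0,\mathbf{x})=\{\mathbf{y}\in\mathcal{Y}^n: s_i\in\{0,\dots,\beta\}\text{ for all } i=0,\dots,n\}$. The distance between two input pairs is $d_n\big((s_0,\mathbf{x}),(\hat s_0,\hat{\mathbf{x}})\big)=\max_{0\le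 i\le n-1}\big|(s_0-\sum_{k=0}^{i}x_k)-(\hat s_0-\sum_{k=0}^{i}\hat x_k)\big|$. *)

(* Defs.v *)
From Stdlib Require Import ZArith List Lia.
Import ListNotations.
Open Scope Z_scope.

Definition psum (v : list Z) (i : nat) : Z := fold_right Z.add 0 (firstn i v).

Definition state (s0 : Z) (x y : list Z) (i : nat) : Z := s0 + psum y i - psum x i.

Definition valid_input (alpha beta : Z) (n : nat) (s0 : Z) (x : list Z) : Prop :=
  0 <= s0 <= beta /\ length x = n /\ Forall (fun xk => 0 <= xk <= alpha) x.

Definition feasible (beta : Z) (n : nat) (s0 : Z) (x y : list Z) : Prop :=
  length y = n /\ forall i : nat, (i <= n)%nat -> 0 <= state s0 x y i <= beta.

(* d_n((s0,x),(s0',x')) = max_{0<=i<=n-1} |(s0 - sum_{k<=i} x_k) - (s0' - sum_{k<=i} x'_k)| ;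
   the fold starting at 0 is harmless since absolute values are >= 0 and n >= 1. *)
Definition dist_n (n : nat) (s0 : Z) (x : list Z) (s0' : Z) (x' : list Z) : Z :=
  fold_right Z.max 0
    (map (fun i => Z.abs ((s0 - psum x (S i)) - (s0' - psum x' (S i)))) (seq 0 n)).

(* Main.v *)
Require Import Defs.
From Stdlib Require Import ZArith List Lia Classical.
Import ListNotations.
Open Scope Z_scope.

Lemma fold_add_acc (l : list Z) (acc : Z) :
  fold_right Z.add acc l = fold_right Z.add 0 l + acc.
Proof. induction l; simpl; lia. Qed.

Lemma psum_app (l1 l2 : list Z) (i : nat) :
  psum (l1 ++ l2) i = psum l1 i + psum l2 (i - length l1).
Proof.
  unfold psum. rewrite firstn_app, fold_right_app, fold_add_acc. lia.
Qed.

Lemma psum_nonneg (x : list Z) (i : nat) :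
  Forall (fun xk => 0 <= xk) x -> 0 <= psum x i.
Proof.
  revert i; induction x as [|a x IH]; intros i H.
  - unfold psum; destruct i; simpl; lia.
  - inversion H; subst. destruct i; unfold psum; simpl; [lia|].
    specialize (IH i H3). unfold psum in IH. lia.
Qed.

Lemma psum_full (y : list Z) (k : nat) : length y = k -> psum y (S k) = psum y k.
Proof.
  intros H. unfold psum. rewrite !firstn_all2 by lia. reflexivity.
Qed.

Lemma fold_max_ge (l : list Z) (a : Z) : In a l -> a <= fold_right Z.max 0 l.
Proof.
  induction l; simpl; [tauto|]. intros [->|H]; [lia|]. specialize (IHl H); lia.
Qed.

Lemma fold_max_le (l : list Z) (B : Z) :
  0 <= B -> (forall a, In a l -> a <= B) -> fold_right Z.max 0 l <= B.
Proof.
  induction l; simpl; intros H0 H; [lia|].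
  assert (fold_right Z.max 0 l <= B) by (apply IHl; auto).
  specialize (H a (or_introl eq_refl)).
  lia.
Qed.

Lemma dist_ge n s0 x s0' x' (i : nat) : (i < n)%nat ->
  Z.abs ((s0 - psum x (S i)) - (s0' - psum x' (S i))) <= dist_n n s0 x s0' x'.
Proof.
  intros H. unfold dist_n. apply fold_max_ge. apply in_map_iff.
  exists i; split; auto. apply in_seq; lia.
Qed.

Lemma max_exists (P : Z -> Prop) (U : Z) :
  (exists z, P z) -> (forall z, P z -> z <= U) ->
  exists M, P M /\ forall z, P z -> z <= M.
Proof.
  intros [z0 Hz0] HU.
  assert (forall k : nat, forall z, P z -> (Z.to_nat (U - z) <= k)%nat ->
            exists M, P M /\ forall z, P z -> z <= M).
  { induction k; intros z Hz Hk.
    - exists z; split; auto. intros z' Hz'. specialize (HU z' Hz'). lia.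
    - destruct (classic (exists z', P z' /\ z < z')) as [[z' [Hz' Hlt]]|Hn].
      + apply (IHk z' Hz'). specialize (HU z' Hz'). lia.
      + exists z; split; auto. intros z' Hz'.
        destruct (Z_le_gt_dec z' z); auto. exfalso; apply Hn; exists z'; split; auto; lia. }
  eapply H; eauto.
Qed.

Theorem lemma1 (alpha beta : Z) (n : nat) (A : Z -> list Z -> Prop) :
  1 <= alpha -> 0 <= beta -> (1 <= n)%nat ->
  (forall s0 x, A s0 x -> valid_input alpha beta n s0 x) ->
  (exists s0 x, A s0 x) ->
  ((forall s0 x s0' x', A s0 x -> A s0' x' -> dist_n n s0 x s0' x' <= beta)
   <->
   (exists y : list Z, length y = n /\
      forall s0 x, A s0 x -> feasible beta n s0 x y)).
Proof.
  intros Ha Hb Hn Hv [s00 [x00 HA0]]. split.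
  - intros Hd.
    assert (Hk : forall k, (k <= n)%nat -> exists y : list Z, length y = k /\
      forall s0 x, A s0 x -> forall i, (i <= k)%nat -> 0 <= state s0 x y i <= beta).
    { induction k; intros Hkn.
      - exists []; split; auto. intros s0 x HA i Hi.
        assert (i = 0%nat) by lia; subst. unfold state, psum; simpl.
        destruct (Hv _ _ HA) as [? _]. lia.
      - destruct (IHk ltac:(lia)) as [y [Hly Hy]].
        destruct (max_exists (fun v => exists s0 x, A s0 x /\ v = s0 - psum x (S k)) beta)
          as [M [[s1 [x1 [HA1 HM]]] HMmax]].
        { exists (s00 - psum x00 (S k)); eauto. }
        { intros z [s0 [x [HA ->]]]. destruct (Hv _ _ HA) as [? [_ Hf]].
          assert (0 <= psum x (S k)); [|lia].
          apply psum_nonneg. eapply Forall_impl; [|exact Hf]. simpl; intros; lia. }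
        exists (y ++ [beta - M - psum y k]). split.
        + rewrite length_app; simpl; lia.
        + intros s0 x HA i Hi. unfold state. rewrite psum_app.
          destruct (Nat.eq_dec i (S k)) as [->|Hne].
          * rewrite Hly. replace (S k - k)%nat with 1%nat by lia.
            rewrite psum_full by auto.
            assert (Hp: forall a, psum [a] 1 = a) by (intros; unfold psum; simpl; lia); rewrite Hp.
            specialize (HMmax (s0 - psum x (S k)) ltac:(eauto)).
            specialize (Hd s1 x1 s0 x HA1 HA).
            pose proof (dist_ge n s1 x1 s0 x k ltac:(lia)). lia.
          * replace (i - length y)%nat with 0%nat by lia.
            specialize (Hy s0 x HA i ltac:(lia)). unfold state in Hy.
            assert (Hp: forall l, psum l 0 = 0) by reflexivity; rewrite Hp. lia. }
    destruct (Hk n (le_n n)) as [y [Hly Hy]]. exists y; split; auto.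
    intros s0 x HA. split; auto.
  - intros [y [Hly Hy]] s0 x s0' x' HA HA'.
    unfold dist_n. apply fold_max_le; auto.
    intros a Hin. apply in_map_iff in Hin. destruct Hin as [i [<- Hi]].
    apply in_seq in Hi.
    destruct (Hy _ _ HA) as [_ H1]. destruct (Hy _ _ HA') as [_ H2].
    specialize (H1 (S i) ltac:(lia)). specialize (H2 (S i) ltac:(lia)).
    unfold state in H1, H2. lia.
Qed.
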